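(* Let $(E,\tau)$ be a violator space. Then $(E,\tau)$ is uniquely generated if and only if $\tau$ satisfies the anti-exchange property: for all $X\subseteq E$ and all distinct $p,q\in E$ with $p,q\notin\tau(X)$, if $p\in\tau(X\cup\{q\})$ then $q\notin\tau(X\cup\{p\})$.
   Context: $E$ is a finite set and $\tau:2^E\to 2^E$. $(E,\tau)$ is a violator space if (C1) $X\subseteq\tau(X)$ for all $X\subseteq E$, and (C22) for all $F,G\subseteq E$, $F\subseteq G\subseteq\tau(F)$ implies $\tau(G)=\tau(F)$. (Equivalently, $V(X)=E-\tau(X)$ satisfies $G\cap V(G)=\emptyset$ and, for $F\subseteq G$ with $G\cap V(F)=\emptyset$, $V(G)=V(F)$.) For $X\subseteq E$, a generator of $X$ is any $B\subseteq E$ with $\tau(B)=\tau(X)$; a basis of $X$ is an inclusion-minimal generator of $X$. The space is uniquely generated if every $X\subseteq E$ has exactly one basis. *)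

(* Defs.v *)
From mathcomp Require Import all_boot.
Set Implicit Arguments. Unset Strict Implicit. Unset Printing Implicit Defensive.

Definition violator_space (E : finType) (tau : {set E} -> {set E}) : Prop :=
  (forall X : {set E}, X \subset tau X) /\
  (forall F G : {set E}, F \subset G -> G \subset tau F -> tau G = tau F).

Definition generator (E : finType) (tau : {set E} -> {set E}) (X B : {set E}) : Prop :=
  tau B = tau X.

Definition basis (E : finType) (tau : {set E} -> {set E}) (X B : {set E}) : Prop :=
  generator tau X B /\ (forall C : {set E}, C \proper B -> ~ generator tau X C).

Definition uniquely_generated (E : finType) (tau : {set E} -> {set E}) : Prop :=
  forall X : {set E}, exists! B : {set E}, basis tau X B.

Definition anti_exchange (E : finType) (tau : {set E} -> {set E}) : Prop :=
  forall (X : {set E}) (p q : E), p != q -> p \notin tau X -> q \notin tau X ->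
    p \in tau (q |: X) -> q \notin tau (p |: X).

(* Main.v *)
Require Import Defs.
From mathcomp Require Import all_boot.

Section S.
Variables (E : finType) (tau : {set E} -> {set E}).
Hypothesis vs : violator_space tau.

Lemma c1 (X : {set E}) : X \subset tau X. Proof. exact: (proj1 vs). Qed.
Lemma c22 (F G : {set E}) : F \subset G -> G \subset tau F -> tau G = tau F.
Proof. exact: (proj2 vs). Qed.

Lemma basis_exists {A X : {set E}} : tau A = tau X -> exists B : {set E}, B \subset A /\ basis tau X B.
Proof.
move=> hA.
have P0 : (A \subset A) && (tau A == tau X) by rewrite subxx hA eqxx.
case: (@arg_minnP _ A (fun B : {set E} => (B \subset A) && (tau B == tau X)) (fun B : {set E} => #|B|) P0) => B /andP [sBA /eqP hB] hmin.
exists B; split=> //; split=> // C pCB gC.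
have := hmin C; rewrite (subset_trans (proper_sub pCB) sBA) /=.
rewrite /generator in gC; rewrite gC eqxx => /(_ isT).
by rewrite leqNgt proper_card.
Qed.

Lemma basis_elem {X B : {set E}} b : basis tau X B -> b \in B -> b \notin tau (B :\ b).
Proof.
move=> [gB mB] bB; apply/negP => hb.
apply: (mB (B :\ b)); first exact: properD1.
rewrite /generator -gB; symmetry; apply: c22; first exact: subD1set.
apply/subsetP => x xB; case: (eqVneq x b) => [->|nxb] //.
by apply: (subsetP (c1 _)); rewrite in_setD1 nxb.
Qed.

Lemma gen_sub {X B : {set E}} : generator tau X B -> B \subset tau X.
Proof. by rewrite /generator => <-; exact: c1. Qed.

Lemma ext_in {X A : {set E}} {x} : generator tau X A -> x \in tau X -> x \notin tau (tau X :\ x) ->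
  x \in A.
Proof.
rewrite /generator => gA xK; apply: contraR => xA; apply/negPn.
have -> : tau (tau X :\ x) = tau A.
  apply: c22; last by rewrite gA subD1set.
  apply/subsetP => y yA; rewrite in_setD1 (subsetP (gen_sub gA)) // andbT.
  by apply: contraNneq xA => <-.
by rewrite negbK gA.
Qed.

Lemma key {X B : {set E}} {b} : anti_exchange tau -> basis tau X B -> b \in B ->
  b \notin tau (tau X :\ b).
Proof.
move=> ae bas bB; have [gB _] := bas.
have sBK := gen_sub gB.
have step : forall s : seq E, all (fun x => x \in tau X :\: B) s ->
    b \notin tau ((B :\ b) :|: [set x in s]).
  elim=> [|q s IH] /=.
    move=> _; have -> : [set x in [::]] = set0 :> {set E}.
      by apply/setP => x; rewrite !inE.
    by rewrite setU0 (basis_elem b bas).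
  case/andP=> qKB hall; have {}IH := IH hall.
  set Z := (B :\ b) :|: [set x in s] in IH *.
  have -> : (B :\ b) :|: [set x in q :: s] = q |: Z.
    by apply/setP => x; rewrite !inE; case: (x == q); rewrite ?orbT.
  move: qKB; rewrite inE => /andP [qB qK].
  have qb : b != q by apply: contraNneq qB => <-.
  have hZb : tau (b |: Z) = tau X.
    rewrite -gB; apply: c22.
      apply/subsetP => x xB; rewrite !inE; case: (eqVneq x b) => //= _.
      by rewrite xB.
    rewrite gB; apply/subsetP => x; rewrite !inE => /orP [/eqP ->|/orP [|]].
    - exact: (subsetP sBK).
    - by case/andP=> _ /(subsetP sBK).
    - by move=> xs; move/allP: hall => /(_ x xs); rewrite inE => /andP[].
  apply/negP => bqZ.
  have qZ : q \notin tau Z.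
    apply/negP => qZ; apply: (negP IH).
    suff <- : tau (q |: Z) = tau Z by [].
    apply: c22; first exact: subsetUr.
    apply/subsetP => y; rewrite in_setU1 => /orP [/eqP ->//|yZ].
    exact: (subsetP (c1 _)).
  by have := ae Z b q qb IH qZ bqZ; rewrite hZb qK.
have := step (enum (tau X :\: B)).
have -> : all (fun x => x \in tau X :\: B) (enum (tau X :\: B)).
  by apply/allP => x; rewrite mem_enum.
have -> : (B :\ b) :|: [set x in enum (tau X :\: B)] = tau X :\ b.
  apply/setP => x; rewrite !inE mem_enum !inE.
  case: (eqVneq x b) => [->|] /=; first by rewrite bB.
  by case xB: (x \in B) => //=; rewrite (subsetP sBK).
by apply.
Qed.

Lemma basis_sub (ae : anti_exchange tau) {X B C : {set E}} :
  basis tau X B -> generator tau X C -> B \subset C.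
Proof.
move=> bas gC; apply/subsetP => b bB.
have [gB _] := bas.
apply: (ext_in gC); first exact: (subsetP (gen_sub gB)).
exact: key ae bas bB.
Qed.

Lemma fwd : uniquely_generated tau -> anti_exchange tau.
Proof.
move=> ug X p q pq pX qX pqX; apply/negP => qpX.
have spX : X \subset tau X := c1 X.
have pnX : p \notin X by apply: contra pX; apply: (subsetP spX).
have qnX : q \notin X by apply: contra qX; apply: (subsetP spX).
set Y := p |: (q |: X).
have hA : tau Y = tau (q |: X).
  apply: c22; first exact: subsetUr.
  apply/subsetP => x; rewrite in_setU1 => /orP [/eqP ->//|].
  exact: (subsetP (c1 _)).
have hC : tau Y = tau (p |: X).
  apply: c22.
    apply/subsetP => x; rewrite !inE => /orP [->//|->]; by rewrite !orbT.
  apply/subsetP => x; rewrite !inE => /orP [/eqP ->|/orP [/eqP ->//|xX]].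
    by apply: (subsetP (c1 _)); rewrite !inE eqxx.
  by apply: (subsetP (c1 _)); rewrite !inE xX orbT.
have [B1 [s1 b1]] := basis_exists (esym hA).
have [B2 [s2 b2]] := basis_exists (esym hC).
have [B0 [_ uB]] := ug Y.
have e12 : B1 = B2 by rewrite -(uB _ b1) -(uB _ b2).
have sBX : B1 \subset X.
  apply/subsetP => x xB.
  have xB2 : x \in B2 by rewrite -e12.
  have := subsetP s1 x xB; have := subsetP s2 x xB2.
  rewrite !inE => /orP [/eqP xp|xX] /orP [/eqP xq|xX'] //.
  by move: pq; rewrite -xp -xq eqxx.
have [g1 _] := b1; rewrite /generator in g1.
have : tau X = tau B1.
  apply: (@c22 B1 X sBX); rewrite g1 hA; apply: subset_trans (c1 _).
  by apply/subsetP => x xX; rewrite !inE xX !orbT.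
rewrite g1 hA => hX; move: pX; by rewrite hX pqX.
Qed.

Lemma bwd : anti_exchange tau -> uniquely_generated tau.
Proof.
move=> ae X.
have [B [_ bas]] := basis_exists (erefl (tau X)).
exists B; split => // B' bas'.
apply/eqP; rewrite eqEsubset.
by rewrite (basis_sub ae bas (proj1 bas')) (basis_sub ae bas' (proj1 bas)).
Qed.

End S.

Theorem mainTheorem9 (E : finType) (tau : {set E} -> {set E}) :
  violator_space tau -> (uniquely_generated tau <-> anti_exchange tau).
Proof. by move=> vs; split; [exact: fwd | exact: bwd]. Qed.
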